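(* Fix $g\ge0$ and $n\ge0$. There is a bijection between Dyck paths of semilength $n$ and height at most $g+1$ and quadruples $(m,L,R,M)$ such that - $m$ is a non-negative integer, - $L=(L_1,\dots,L_m)$ is an $m$-tuple of Dyck paths of height at most $\lfloor g/2\rfloor$, - $R=(R_1,\dots,R_m)$ is an $m$-tuple of Dyck paths of height at most $\lceil g/2\rceil$, - $M$ is a Dyck path of height at most $\lceil g/2\rceil$ if $m=0$, and of height exactly $\lceil g/2\rceil$ otherwise, and the sum of the semilengths of the Dyck paths in $L$, $R$ and $M$ is $n-m$.
   Context: A Dyck path of semilength $k\ge0$ is a lattice path from $(0,0)$ to $(2k,0)$ with steps $(1,1)$ and $(1,-1)$ never going below the $x$-axis (the empty path is the Dyck path of semilength $0$). Its height is the maximal $y$-coordinate it attains. *)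

(* Defs.v *)
From mathcomp Require Import all_boot.
Set Implicit Arguments. Unset Strict Implicit. Unset Printing Implicit Defensive.

(* A lattice path with steps (1,1) (= true) and (1,-1) (= false) is encoded
   as a sequence of booleans. *)

Fixpoint dyck_from (h : nat) (p : seq bool) : bool :=
  match p with
  | [::] => h == 0
  | true :: p' => dyck_from h.+1 p'
  | false :: p' => (0 < h) && dyck_from h.-1 p'
  end.

Definition dyck (p : seq bool) : bool := dyck_from 0 p.

Fixpoint height_from (h : nat) (p : seq bool) : nat :=
  match p with
  | [::] => h
  | b :: p' => maxn h (height_from (if b then h.+1 else h.-1) p')
  end.

Definition height (p : seq bool) : nat := height_from 0 p.

Definition semilength (p : seq bool) : nat := (size p)./2.

Definition dyck_bounded (g n : nat) (p : seq bool) : Prop :=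
  dyck p /\ semilength p = n /\ height p <= g.+1.

Definition quad := (nat * seq (seq bool) * seq (seq bool) * seq bool)%type.

Definition good_quad (g n : nat) (q : quad) : Prop :=
  let: (m, L, R, M) := q in
  [/\ size L = m /\ size R = m,
      all (fun P => dyck P && (height P <= g./2)) L,
      all (fun P => dyck P && (height P <= (g.+1)./2)) R,
      dyck M && (if m == 0 then height M <= (g.+1)./2
                 else height M == (g.+1)./2)
    & \sum_(P <- L) semilength P + \sum_(P <- R) semilength P
        + semilength M + m = n].

(* Main.v *)
Require Import Defs.
From mathcomp Require Import all_boot zify.
From Stdlib Require Import ProofIrrelevance.
Set Implicit Arguments. Unset Strict Implicit. Unset Printing Implicit Defensive.

Definition step (h : nat) (x : bool) := if x then h.+1 else h.-1.
Definition lvl h p := foldl step h p.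
Arguments lvl : simpl never.
Lemma lvl_nil h : lvl h [::] = h. Proof. by []. Qed.

Fixpoint rng (lo hi h : nat) (p : seq bool) : bool :=
  (lo <= h <= hi) && match p with [::] => true
                     | x :: p' => (x || (0 < h)) && rng lo hi (step h x) p' end.

Fixpoint spl (t : nat -> seq bool -> bool) (h : nat) (p : seq bool) : seq bool * seq bool :=
  if t h p then ([::], p) else
  match p with [::] => ([::], [::])
  | x :: p' => let r := spl t (step h x) p' in (x :: r.1, r.2) end.

Fixpoint avoid (t : nat -> seq bool -> bool) h u v :=
  match u with [::] => true | x :: u' => ~~ t h (x :: u' ++ v) && avoid t (step h x) u' v end.

Lemma lvl_cons h x p : lvl h (x :: p) = lvl (step h x) p.
Proof. by []. Qed.
Lemma lvl_cat h u v : lvl h (u ++ v) = lvl (lvl h u) v.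
Proof. by rewrite /lvl foldl_cat. Qed.

Lemma spl_cat t h p : (spl t h p).1 ++ (spl t h p).2 = p.
Proof.
elim: p h => [|x p IH] h /=; first by case: (t h [::]).
by case: (t h (x :: p)) => //=; rewrite IH.
Qed.

Lemma spl_avoid t h p : avoid t h (spl t h p).1 (spl t h p).2.
Proof.
elim: p h => [|x p IH] h /=; first by case: (t h [::]).
case E: (t h (x :: p)) => //=; by rewrite spl_cat E IH.
Qed.

Lemma spl_end t h p : t (lvl h (spl t h p).1) (spl t h p).2 || ((spl t h p).2 == [::]).
Proof.
elim: p h => [|x p IH] h /=; first by case E: (t h [::]) => /=; rewrite ?E.
case E: (t h (x :: p)) => /=; first by rewrite E.
exact: IH.
Qed.

Lemma spl_uniq t h u v : avoid t h u v -> (t (lvl h u) v || (v == [::])) ->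
  spl t h (u ++ v) = (u, v).
Proof.
elim: u h => [|x u IH] h /=.
  move=> _; rewrite /lvl /=; case: v => [|y v] /=.
    by case: (t h [::]).
  by rewrite orbF => ->.
case/andP => /negbTE -> av e; by rewrite IH.
Qed.

Lemma rng_start lo hi h p : rng lo hi h p -> lo <= h <= hi.
Proof. by case: p => [|x p] /= /andP []. Qed.

Lemma rng_cat lo hi h u v : rng lo hi h (u ++ v) = rng lo hi h u && rng lo hi (lvl h u) v.
Proof.
elim: u h => [|x u IH] h /=.
  by apply/idP/idP => [H|/andP [] //]; rewrite H (rng_start H).
by rewrite IH !andbA.
Qed.

Lemma rng_lvl lo hi h p : rng lo hi h p -> lo <= lvl h p <= hi.
Proof.
elim: p h => [|x p IH] h /=; first by rewrite andbT.
by case/andP => _ /andP [] _ /IH.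
Qed.

Lemma rng_mono lo hi lo' hi' h p : lo' <= lo -> hi <= hi' -> rng lo hi h p -> rng lo' hi' h p.
Proof.
move=> l1 l2; elim: p h => [|x p IH] h /=.
  rewrite !andbT => /andP [] *; apply/andP; split; lia.
case/andP => /andP [] a1 a2 /andP [] -> /IH ->; rewrite andbT; apply/andP; split; lia.
Qed.

Lemma rng_shift lo hi s h p : rng (lo + s) (hi + s) (h + s) p = rng lo hi h p.
Proof.
elim: p h => [|x p IH] h /=; first by rewrite !leq_add2r.
rewrite !leq_add2r; case: x => /=.
  by rewrite -addSn IH.
case: h => [|h] /=.
  rewrite add0n andbF andbC; case: s {IH} => //= s.
  by case R: (rng _ _ _ _) => //; move: (rng_start R); lia.
by rewrite IH.
Qed.

Lemma lvl_shift lo hi s h p : rng lo hi h p -> lvl (h + s) p = lvl h p + s.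
Proof.
elim: p h => [|x p IH] h // /andP [] _ /andP [] hx R.
rewrite !lvl_cons -IH //; congr lvl.
case: x hx {R} => //= hx; lia.
Qed.

Lemma rng_flip hi h p : h <= hi -> rng 0 hi (hi - h) (map negb p) = rng 0 hi h p.
Proof.
elim: p h => [|x p IH] h /= hh; first by rewrite leq_subr hh.
rewrite leq_subr hh /=; case: x => /=.
  case: (ltnP h hi) => hl.
    have -> : (hi - h).-1 = hi - h.+1 by lia.
    rewrite IH // subn_gt0 hl //.
  have -> : h = hi by lia.
  by rewrite subnn /=; case R: (rng _ _ _ _) => //; move: (rng_start R); lia.
case: h hh => [|h] hh /=.
  by rewrite subn0; case R: (rng _ _ _ _) => //; move: (rng_start R); lia.
have -> : (hi - h.+1).+1 = hi - h by lia.
by rewrite IH //; lia.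
Qed.

Lemma lvl_flip hi h p : rng 0 hi h p -> lvl (hi - h) (map negb p) = hi - lvl h p.
Proof.
elim: p h => [|x p IH] h; first by [].
move=> /andP [] /andP [] _ hh /andP [] hx R.
rewrite map_cons !lvl_cons -IH //; congr lvl.
move: (rng_start R); case: x hx {R} => //= hx; lia.
Qed.

Definition tB (b h : nat) (r : seq bool) := h == b.
Definition tS (b h : nat) (r : seq bool) := (h == b) && head false r.
Definition tL (b h : nat) (r : seq bool) := (h == b.+1) && ~~ head true r.

Lemma height_ge h p : h <= height_from h p.
Proof. by case: p => [|x p] //=; rewrite leq_maxl. Qed.

Lemma dyck_rng c h p : dyck_from h p && (height_from h p <= c) = rng 0 c h p && (lvl h p == 0).
Proof.
elim: p h => [|x p IH] h /=; first by rewrite andbT andbC.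
rewrite lvl_cons; case: x => /=.
  have -> : maxn h (height_from h.+1 p) = height_from h.+1 p.
    by apply/maxn_idPr; apply: leq_trans (height_ge _ _).
  rewrite IH; case R: (rng _ _ _ _); rewrite ?andbF //=; by move: (rng_start R); case/andP => _ /ltnW ->.
rewrite geq_max; case: (0 < h) => //=; case: (h <= c) => //=; by rewrite ?IH ?andbF.
Qed.

Lemma dyck_even h p : dyck_from h p -> ~~ odd (size p + h).
Proof.
elim: p h => [|x p IH] h /=; first by move/eqP ->.
case: x => /=; first by move/IH; rewrite addnS.
case/andP => hp /IH; case: h hp => //= h _; by rewrite addnS /= negbK.
Qed.

Lemma lvl_height h u v : lvl h u <= height_from h (u ++ v).
Proof.
elim: u h => [|x u IH] h /=; first exact: height_ge.
by rewrite lvl_cons; apply: leq_trans (IH _) (leq_maxr _ _).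
Qed.

Lemma avoid_tB b h u v v' : avoid (tB b) h u v = avoid (tB b) h u v'.
Proof. by elim: u h => [|x u IH] h //=; rewrite IH. Qed.

Lemma reach b h u : avoid (tB b) h u [::] -> lvl h u != b -> h <= b -> height_from h u < b.
Proof.
elim: u h => [|x u IH] h /=; first by move=> _ ne le; rewrite ltn_neqAle ne le.
rewrite lvl_cons /tB => /andP [] ne av nl le.
rewrite gtn_max IH //; first by rewrite ltn_neqAle ne le.
by case: x {av nl}; rewrite /step //=; lia.
Qed.

Lemma A1 b c h u v : h <= b -> avoid (tB b) h u v -> rng 0 c h u -> rng 0 b h u.
Proof.
elim: u h => [|x u IH] h /=; first by move=> -> _ /=.
rewrite /tB => le /andP [] ne av /andP [] _ /andP [] -> R /=.
rewrite le (IH _ _ av R) //.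
by case: x {av R}; rewrite /step //=; lia.
Qed.

Lemma A2 b c h u v : h <= b -> avoid (tS b) h u v -> rng 0 c h u -> rng 0 b h u.
Proof.
elim: u h => [|x u IH] h /=; first by move=> -> _ /=.
rewrite /tS => le /andP [] ne av /andP [] _ /andP [] -> R /=.
rewrite le (IH _ _ av R) //.
by case: x ne {av R}; rewrite /step //= ?andbT; lia.
Qed.

Lemma A3 b c h u v : b < h -> avoid (tL b) h u v -> rng 0 c h u -> rng b.+1 c h u.
Proof.
elim: u h => [|x u IH] h /=; first by move=> -> _ /=.
rewrite /tL => le /andP [] ne av /andP [] hc /andP [] hx R /=.
rewrite le hc hx (IH _ _ av R) //.
by case: x ne hx {av R}; rewrite /step //= ?andbT; lia.
Qed.

Lemma avS b h u v : rng 0 b h u -> avoid (tS b) h u v.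
Proof.
elim: u h => [|x u IH] h //= /andP [] _ /andP [] hx R.
rewrite (IH _ R) andbT /tS /=; case: x hx R => _ R; rewrite ?andbF //.
move: (rng_start R); rewrite ?andbT ?andbF //. rewrite /step; move=> /andP [] _ H; apply/eqP; lia.
Qed.

Lemma avL b c h u v : rng b.+1 c h u -> avoid (tL b) h u v.
Proof.
elim: u h => [|x u IH] h //= /andP [] _ /andP [] hx R.
rewrite (IH _ R) andbT /tL /=; case: x hx R => _ R; rewrite ?andbF //.
move: (rng_start R); rewrite ?andbT ?andbF //. rewrite /step; move=> /andP [] H _; apply/eqP; lia.
Qed.

Definition blk (x : seq bool * seq bool) := x.1 ++ true :: x.2 ++ [:: false].

Fixpoint blocks b fuel r : seq (seq bool * seq bool) * seq bool :=
  match fuel with 0 => ([::], r) | fuel'.+1 =>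
  let sv := spl (tS b) b r in
  if sv.2 is true :: v' then
    let lw := spl (tL b) b.+1 v' in
    let rc := blocks b fuel' (behead lw.2) in ((sv.1, lw.1) :: rc.1, rc.2)
  else ([::], r) end.

Definition build b (q : quad) : seq bool :=
  let: (m, L, R, M) := q in
  let pm := spl (tB b) 0 M in
  pm.1 ++ flatten (map blk (zip (map (map negb) R) L)) ++ pm.2.

Definition parse b (P : seq bool) : quad :=
  let pr := spl (tB b) 0 P in
  let bs := blocks b (size P) pr.2 in
  (size bs.1, map snd bs.1, map (fun x => map negb x.1) bs.1, pr.1 ++ bs.2).

Definition blkok a b (x : seq bool * seq bool) :=
  rng 0 b b x.1 && (lvl b x.1 == b) && rng 0 a 0 x.2 && (lvl 0 x.2 == 0).

Lemma BL a b fuel r : size r <= fuel -> rng 0 (a + b.+1) b r -> lvl b r = 0 ->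
  let bs := blocks b fuel r in
  [/\ flatten (map blk bs.1) ++ bs.2 = r, all (blkok a b) bs.1,
      rng 0 b b bs.2 & lvl b bs.2 == 0].
Proof.
elim: fuel r => [|f IH] r /=.
  by rewrite leqn0 => /nilP -> _; rewrite lvl_nil => ->.
move=> sz R lv.
have cat1 := spl_cat (tS b) b r; have av1 := spl_avoid (tS b) b r.
have e1 := spl_end (tS b) b r.
move: cat1 av1 e1; case: (spl (tS b) b r) => S v /= cat1 av1 e1.
case: v cat1 av1 e1 => [|x v'] cat1 av1 e1.
  rewrite cats0 in cat1; subst r; split => //; last by rewrite lv.
  exact: A2 av1 R.
case: x cat1 av1 e1 => cat1 av1 e1; last by rewrite /tS /= andbF in e1.
rewrite /tS /= andbT orbF in e1; subst r.
move: R; rewrite rng_cat (eqP e1) => /andP [] RS /= /andP [] _ Rv.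
have cat2 := spl_cat (tL b) b.+1 v'; have av2 := spl_avoid (tL b) b.+1 v'.
have e2 := spl_end (tL b) b.+1 v'.
move: cat2 av2 e2; case: (spl (tL b) b.+1 v') => L' w /= cat2 av2 e2; subst v'.
move: Rv; rewrite rng_cat => /andP [] RL Rw.
have RL' := A3 (ltnSn b) av2 RL.
move: lv; rewrite lvl_cat (eqP e1) lvl_cons /= lvl_cat => lv.
case: w e2 Rw lv av1 sz av2 => [|y w'] e2 Rw lv av1 sz av2.
  by move: (rng_lvl RL'); rewrite lvl_nil in lv; rewrite lv.
rewrite /tL /= orbF in e2; case/andP: e2 => /eqP e2 hy.
rewrite e2 in Rw lv; case: y hy Rw lv av1 sz av2 => // _ /= /andP [] _ Rw; rewrite lvl_cons /= => lv av1 sz av2.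
have RL0 : rng 0 a 0 L' by rewrite -(rng_shift _ _ b.+1).
have sw : size w' <= f.
  by move: sz; rewrite size_cat /= size_cat /=; lia.
case: (IH w' sw Rw lv) => c1 c2 c3 c4; split => //.
- by rewrite -[in RHS]c1 /blk /= -!catA /= -catA.
- rewrite c2 andbT /blkok /= RL0 e1 (A2 (leqnn b) av1 RS) /=.
  by move: (lvl_shift b.+1 RL0); rewrite add0n e2; lia.
Qed.

Lemma blocks_nil b fuel : blocks b fuel [::] = ([::], [::]).
Proof. by case: fuel => //= f; rewrite /tS eqxx. Qed.

Lemma ev_size x : dyck x -> size x = (semilength x).*2.
Proof.
move/dyck_even; rewrite addn0 => /negbTE o.
by rewrite /semilength -{1}(odd_double_half (size x)) o.
Qed.

Lemma size_flat m L R : size L = m -> size R = m -> all dyck L -> all dyck R ->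
  size (flatten (map blk (zip (map (map negb) R) L))) =
  (\sum_(P <- L) semilength P + \sum_(P <- R) semilength P + m).*2.
Proof.
elim: L R m => [|x L IH] [|y R] [|m] //=; first by rewrite !big_nil.
case=> eL [] eR /andP [] dx dL /andP [] dy dR.
rewrite size_cat /blk /= size_cat /= size_map (IH R m) // !big_cons.
rewrite size_cat (ev_size dx) (ev_size dy) /= !doubleD -!addnn; lia.
Qed.

Lemma SL b m L R M : size L = m -> size R = m -> all dyck L -> all dyck R -> dyck M ->
  semilength (build b (m, L, R, M)) =
  \sum_(P <- L) semilength P + \sum_(P <- R) semilength P + semilength M + m.
Proof.
move=> eL eR dL dR dM; rewrite /build [in LHS]/semilength !size_cat (size_flat eL eR dL dR).
have := spl_cat (tB b) 0 M => /(congr1 size); rewrite size_cat => e.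
rewrite addnCA e (ev_size dM) -doubleD doubleK; lia.
Qed.

Lemma rngL a b L : rng 0 a 0 L -> rng b.+1 (a + b.+1) b.+1 L.
Proof. by have := rng_shift 0 a b.+1 0 L; rewrite !add0n => ->. Qed.

Lemma lvlL a b L : rng 0 a 0 L -> lvl 0 L = 0 -> lvl b.+1 L = b.+1.
Proof. by move=> R e; have := lvl_shift b.+1 R; rewrite !add0n e. Qed.

Lemma BD a b Z fuel suf : size Z <= fuel -> all (blkok a b) Z -> rng 0 b b suf ->
  blocks b fuel (flatten (map blk Z) ++ suf) = (Z, suf).
Proof.
elim: Z fuel => [|[S L] Z IH] [|f] //= sz.
  move=> _ Rs; rewrite -{1}[suf]cats0 spl_uniq //; [exact: (avS _ Rs) | by rewrite orbT].
case/andP => H ok Rs; move: H; rewrite /blkok /= => /andP [] /andP [] /andP [] RS lS RL /eqP lL.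
rewrite /blk /= -!catA /= -!catA /= -/blk.
rewrite spl_uniq /=; last by rewrite /tS lS.
  rewrite spl_uniq /=; last by rewrite /tL (lvlL b RL lL) eqxx.
    by rewrite IH.
  exact: (avL _ (rngL b RL)).
exact: (avS _ RS).
Qed.

Lemma blk_ok a b x : blkok a b x -> rng 0 (a + b.+1) b (blk x) && (lvl b (blk x) == b).
Proof.
case: x => S L; rewrite /blkok /blk /= => /andP [] /andP [] /andP [] RS /eqP lS RL /eqP lL.
rewrite rng_cat lvl_cat lS lvl_cons /= rng_cat lvl_cat (lvlL b RL lL) /= lvl_cons /= lvl_nil eqxx.
rewrite (rng_mono _ _ RS) //; last by lia.
rewrite (rng_mono _ _ (rngL b RL)) //.
rewrite !andbT; apply/andP; split; lia.
Qed.

Lemma FZ a b Z : all (blkok a b) Z ->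
  rng 0 (a + b.+1) b (flatten (map blk Z)) && (lvl b (flatten (map blk Z)) == b).
Proof.
elim: Z => [|x Z IH] /=; first by rewrite lvl_nil eqxx andbT /=; lia.
case/andP => /blk_ok /andP [] R0 /eqP l0 /IH /andP [] R1 l1.
by rewrite rng_cat lvl_cat l0 R0 R1 l1.
Qed.

Lemma all_zip (S T : Type) (P1 : S -> bool) (P2 : T -> bool) s t :
  all P1 s -> all P2 t -> all (fun x => P1 x.1 && P2 x.2) (zip s t).
Proof.
elim: s t => [|x s IH] [|y t] //= /andP [] -> /IH H /andP [] -> /H -> //.
Qed.

Lemma size_blk Z : size Z <= size (flatten (map blk Z)).
Proof.
elim: Z => [|x Z IH] //=; move: IH; rewrite size_cat /blk size_cat /= => IH; lia.
Qed.

Definition goodq a b n (q : quad) : Prop :=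
  let: (m, L, R, M) := q in
  [/\ size L = m /\ size R = m,
      all (fun P => dyck P && (height P <= a)) L,
      all (fun P => dyck P && (height P <= b)) R,
      dyck M && (if m == 0 then height M <= b else height M == b)
    & \sum_(P <- L) semilength P + \sum_(P <- R) semilength P + semilength M + m = n].

Arguments goodq : simpl never.

Lemma dyck_h c p : dyck p && (height p <= c) = rng 0 c 0 p && (lvl 0 p == 0).
Proof. exact: dyck_rng. Qed.

Lemma goodq_sum a b n m L R M :
  [/\ size L = m /\ size R = m,
      all (fun P => dyck P && (height P <= a)) L,
      all (fun P => dyck P && (height P <= b)) R &
      dyck M && (if m == 0 then height M <= b else height M == b)] ->
  semilength (build b (m, L, R, M)) = n -> goodq a b n (m, L, R, M).
Proof.
case=> [[eL eR] aL aR /andP [] dM hM] <-; split => //; first by rewrite dM.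
rewrite SL //.
- by apply: sub_all aL => x /andP [].
- by apply: sub_all aR => x /andP [].
Qed.

Lemma PL a b n P : dyck P -> height P <= a + b.+1 -> semilength P = n ->
  build b (parse b P) = P /\ goodq a b n (parse b P).
Proof.
move=> dP hP sP.
have /andP [RP /eqP lP] : rng 0 (a + b.+1) 0 P && (lvl 0 P == 0) by rewrite -dyck_h dP hP.
rewrite /parse.
have c1 := spl_cat (tB b) 0 P; have av1 := spl_avoid (tB b) 0 P.
have e1 := spl_end (tB b) 0 P.
move: c1 av1 e1; case: (spl (tB b) 0 P) => pre rest /= c1 av1 e1.
move: RP lP; rewrite -{1 2}c1 rng_cat lvl_cat => /andP [] Rpre0 Rrest lrest.
have Rpre := A1 (leq0n b) av1 Rpre0.
have [er | nr] := eqVneq rest [::].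
  subst rest; rewrite blocks_nil /=; rewrite cats0 in c1.
  have eb : build b (0, [::], [::], pre ++ [::]) = P.
    by rewrite /build /= spl_cat cats0.
  split => //; apply: goodq_sum; last by rewrite eb.
  split => //; rewrite cats0 dyck_h Rpre.
  by rewrite lvl_nil in lrest; rewrite lrest.
rewrite (negbTE nr) orbF /tB in e1; rewrite (eqP e1) in Rrest lrest.
have sz : size rest <= size P by rewrite -c1 size_cat leq_addl.
move: (BL sz Rrest lrest); case: (blocks b (size P) rest) => bl suf /= [c2 c3 c4 c5].
have eb : build b (size bl, [seq i.2 | i <- bl], [seq [seq ~~ i | i <- i.1] | i <- bl], pre ++ suf) = P.
  rewrite /build spl_uniq; last by rewrite /tB e1.
    have -> : map (map negb) (map (fun x => map negb x.1) bl) = unzip1 bl.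
      by rewrite -map_comp; apply: eq_map => x /=; exact: (mapK negbK).
    by rewrite zip_unzip c2 c1.
  by rewrite (avoid_tB _ _ _ _ rest).
split => //; apply: goodq_sum; last by rewrite eb.
split.
- by split; rewrite size_map.
- rewrite all_map; apply: sub_all c3 => x; rewrite /blkok => /andP [] /andP [] _ H1 H2 /=.
  by rewrite dyck_h H1 H2.
- rewrite all_map; apply: sub_all c3 => x; rewrite /blkok => /andP [] /andP [] /andP [] R1 /eqP l1 _ _ /=.
  rewrite dyck_h; have := @rng_flip b b x.1 (leqnn b); rewrite subnn => ->.
  by have := lvl_flip R1; rewrite subnn l1 subnn => ->; rewrite R1.
- have hM : dyck (pre ++ suf) && (height (pre ++ suf) <= b).
    by rewrite dyck_h rng_cat lvl_cat Rpre (eqP e1) c4 c5.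
  case/andP: hM => -> hM /=; case: (size bl == 0) => //.
  rewrite eqn_leq hM /=; have := lvl_height 0 pre suf; by rewrite (eqP e1).
Qed.

Lemma BV a b n q : goodq a b n q ->
  [/\ dyck (build b q), height (build b q) <= a + b.+1, semilength (build b q) = n
    & parse b (build b q) = q].
Proof.
case: q => [[[m L] R] M]; rewrite /goodq => -[[eL eR] aL aR /andP [] dM hM sum].
have hMb : height M <= b by case: (m == 0) hM => // /eqP ->.
have /andP [RM /eqP lM] : rng 0 b 0 M && (lvl 0 M == 0) by rewrite -dyck_h dM hMb.
have sl : semilength (build b (m, L, R, M)) = n.
  rewrite SL // -?sum //.
  - by apply: sub_all aL => x /andP [].
  - by apply: sub_all aR => x /andP [].
rewrite -{}sl.
set Z := zip (map (map negb) R) L.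
have okZ : all (blkok a b) Z.
  have := all_zip (P1 := fun S => rng 0 b b S && (lvl b S == b))
                  (P2 := fun L => rng 0 a 0 L && (lvl 0 L == 0))
                  (s := map (map negb) R) (t := L).
  have -> : all (fun S => rng 0 b b S && (lvl b S == b)) (map (map negb) R).
    rewrite all_map; apply: sub_all aR => y; rewrite dyck_h => /andP [] Ry /eqP ly /=.
    have := @rng_flip b 0 y (leq0n b); rewrite subn0 => ->; rewrite Ry /=.
    by have := lvl_flip Ry; rewrite subn0 ly subn0 => ->.
  have -> : all (fun L => rng 0 a 0 L && (lvl 0 L == 0)) L.
    by apply: sub_all aL => y; rewrite dyck_h.
  move=> /(_ isT isT); apply: sub_all => x /andP [] /andP [] h1 h2 /andP [] h3 h4.
  by rewrite /blkok h1 h2 h3 h4.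
have c1 := spl_cat (tB b) 0 M; have av1 := spl_avoid (tB b) 0 M.
have e1 := spl_end (tB b) 0 M.
rewrite /build -/Z.
move: c1 av1 e1; case: (spl (tB b) 0 M) => pre suf /= c1 av1 e1.
move: RM lM hM; rewrite -c1 rng_cat lvl_cat => /andP [] Rpre Rsuf lsuf hM.
have key : lvl 0 pre = b \/ (Z = [::] /\ suf = [::]).
  have [e | ne] := eqVneq (lvl 0 pre) b; first by left.
  right; move: e1; rewrite /tB (negbTE ne) /= => /eqP es; subst suf.
  case: (eqVneq m 0) => [m0 | mn0].
    split => //; rewrite /Z; move: eL; rewrite m0 => /size0nil ->.
    by case: (map _ _).
  move: hM; rewrite (negbTE mn0) cats0 => /eqP hM.
  have := reach av1 ne (leq0n b); rewrite -/(height pre) hM ltnn //.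
have sp : spl (tB b) 0 (pre ++ flatten (map blk Z) ++ suf) = (pre, flatten (map blk Z) ++ suf).
  apply: spl_uniq; first by rewrite (avoid_tB _ _ _ _ suf).
  by case: key => [-> | [-> ->]]; rewrite /tB ?eqxx ?orbT.
have Rs : rng 0 b b suf.
  by case: key => [e | [_ ->]]; [rewrite e in Rsuf | rewrite /= leqnn].
have val : rng 0 (a + b.+1) 0 (pre ++ flatten (map blk Z) ++ suf) &&
           (lvl 0 (pre ++ flatten (map blk Z) ++ suf) == 0).
  case: key => [e | [eZ es]].
    have /andP [R1 /eqP l1] := FZ okZ.
    rewrite rng_cat lvl_cat rng_cat lvl_cat e R1 l1 -e lsuf eqxx andbT.
    rewrite (rng_mono _ _ Rpre) //; last by lia.
    by rewrite (rng_mono _ _ Rsuf) //; lia.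
  rewrite eZ es /= cats0; rewrite es lvl_nil in lsuf; rewrite lsuf eqxx andbT.
  by apply: rng_mono Rpre => //; lia.
move: val; rewrite -dyck_h => /andP [] -> -> /=; split => //.
rewrite /parse sp /= (BD _ okZ Rs); last first.
  by rewrite !size_cat; have := size_blk Z; lia.
have sRL : size (map (map negb) R) = size L by rewrite size_map eL eR.
have -> : map snd Z = L by change (unzip2 Z = L); rewrite /Z unzip2_zip // sRL.
have -> : map (fun x => map negb x.1) Z = map (map negb) (unzip1 Z) by rewrite -map_comp.
rewrite /Z unzip1_zip ?sRL // (mapK (mapK negbK)) /= size_zip sRL eL minnn //.
Qed.

Lemma sig_eq (A : Type) (P : A -> Prop) (x y : {a | P a}) : proj1_sig x = proj1_sig y -> x = y.
Proof.
case: x y => [x hx] [y hy] /= e; subst y; by rewrite (proof_irrelevance _ hx hy).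
Qed.

Theorem lemma3p11 (g n : nat) :
  exists f : {p : seq bool | dyck_bounded g n p} -> {q : quad | good_quad g n q},
    bijective f.
Proof.
have eg : g./2 + ((g.+1)./2).+1 = g.+1.
  have -> : (g.+1)./2 = uphalf g by [].
  have := odd_double_half g; rewrite uphalf_half -addnn; case: (odd g) => /=; lia.
have PL' : forall p, dyck_bounded g n p -> good_quad g n (parse ((g.+1)./2) p).
  move=> p [dp [sp hp]]; rewrite -eg in hp; have [_ H] := PL dp hp sp; exact: H.
have BV' : forall q, good_quad g n q -> dyck_bounded g n (build ((g.+1)./2) q).
  move=> q hq; have [d h s _] := BV (hq : goodq (g./2) ((g.+1)./2) n q).
  rewrite eg in h; by split; [exact: d | split; [exact: s | exact: h]].
exists (fun p => exist _ (parse _ (sval p)) (PL' _ (svalP p))).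
exists (fun q => exist _ (build _ (sval q)) (BV' _ (svalP q))).
- case=> p hp; apply: sig_eq.
  have [dp [sp hp']] := hp; rewrite -eg in hp'; have [e _] := PL dp hp' sp; exact: e.
- case=> q hq; apply: sig_eq.
  have [_ _ _ e] := BV (hq : goodq (g./2) ((g.+1)./2) n q); exact: e.
Qed.
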